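(* Let $\mathcal{Q}\subseteq\mathbb{R}^n$ be a configuration manifold and consider the robotic system $$\mathbf{D}(\mathbf{q})\ddot{\mathbf{q}}+\mathbf{C}(\mathbf{q},\dot{\mathbf{q}})\dot{\mathbf{q}}+\mathbf{G}(\mathbf{q})=\mathbf{B}\mathbf{u},\qquad \mathbf{u}\in\mathbb{R}^m,$$ written in control affine form $\dot{\mathbf{x}}=\mathbf{f}(\mathbf{x})+\mathbf{g}(\mathbf{x})\mathbf{u}$ with $\mathbf{x}=(\mathbf{q},\dot{\mathbf{q}})\in T\mathcal{Q}$, $$\mathbf{f}(\mathbf{x})=\begin{bmatrix}\dot{\mathbf{q}}\\ -\mathbf{D}(\mathbf{q})^{-1}\big(\mathbf{C}(\mathbf{q},\dot{\mathbf{q}})\dot{\mathbf{q}}+\mathbf{G}(\mathbf{q})\big)\end{bmatrix},\qquad \mathbf{g}(\mathbf{x})=\begin{bmatrix}\mathbf{0}\\ \mathbf{D}(\mathbf{q})^{-1}\mathbf{B}\end{bmatrix}.$$ Let $h_0:\mathcal{Q}\to\mathbb{R}$ be continuously differentiable, defining $\mathcal{C}_0=\{\mathbf{q}\in\mathcal{Q}: h_0(\mathbf{q})\ge 0\}$, and suppose there exist a continuously differentiable $\mathbf{k}_0:\mathcal{Q}\to\mathbb{R}^n$ and an extended class $\mathcal{K}_\infty$ function $\alpha$ such that $\nabla h_0(\mathbf{q})\cdot\mathbf{k}_0(\mathbf{q})>-\alpha(h_0(\mathbf{q}))$ for all $\mathbf{q}\in\mathcal{Q}$. Fix $\mu>0$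 and define $$h(\mathbf{q},\dot{\mathbf{q}})=h_0(\mathbf{q})-\frac{1}{2\mu}(\dot{\mathbf{q}}-\mathbf{k}_0(\mathbf{q}))^\top\mathbf{D}(\mathbf{q})(\dot{\mathbf{q}}-\mathbf{k}_0(\mathbf{q})),\qquad \mathcal{C}=\{(\mathbf{q},\dot{\mathbf{q}})\in T\mathcal{Q}: h(\mathbf{q},\dot{\mathbf{q}})\ge0\}.$$ If the system is fully actuated ($m=n$ and $\mathbf{B}$ invertible), then $h$ is a control barrier function for the control affine system $\dot{\mathbf{x}}=\mathbf{f}(\mathbf{x})+\mathbf{g}(\mathbf{x})\mathbf{u}$ on $\mathcal{C}$.
   Context: $\mathbf{D}(\mathbf{q})\in\mathbb{R}^{n\times n}$ is the positive definite inertia matrix (assumed continuously differentiable in $\mathbf{q}$), $\mathbf{C}$ the Coriolis matrix, $\mathbf{G}$ the gravity/potential term, $\mathbf{B}\in\mathbb{R}^{n\times m}$ the actuation matrix. A continuous function $\alpha:\mathbb{R}\to\mathbb{R}$ is extended class $\mathcal{K}_\infty$ if $\alpha(0)=0$, $\alpha$ is strictly increasing and $\lim_{s\to\pm\infty}\alpha(s)=\pm\infty$. For a scalar $h$, $L_{\mathbf{f}}h(\mathbf{x})=\nabla h(\mathbf{x})\cdot\mathbf{f}(\mathbf{x})$ and $L_{\mathbf{g}}h(\mathbf{x})=\nabla h(\mathbf{x})^\top\mathbf{g}(\mathbf{x})$. A continuously differentiable $h$ defining $\mathcal{C}=\{h\ge0\}$ is a control barrier function (CBF) for $\dot{\mathbf{x}}=\mathbf{f}(\mathbf{x})+\mathbf{g}(\mathbf{x})\mathbf{u}$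 on $\mathcal{C}$ if there exists an extended class $\mathcal{K}_\infty$ function $\alpha$ such that for all states $\mathbf{x}$: $\sup_{\mathbf{u}\in\mathbb{R}^m}\{L_{\mathbf{f}}h(\mathbf{x})+L_{\mathbf{g}}h(\mathbf{x})\mathbf{u}\}>-\alpha(h(\mathbf{x}))$. *)

(* Defs.v *)
From HB Require Import structures.
From mathcomp Require Import all_boot all_order all_algebra.
From mathcomp Require Import all_classical all_reals all_analysis.
Set Implicit Arguments. Unset Strict Implicit. Unset Printing Implicit Defensive.
Import Order.TTheory GRing.Theory Num.Theory.
Import numFieldNormedType.Exports.
Local Open Scope classical_set_scope.
Local Open Scope ring_scope.

Definition ext_class_Kinf (R : realType) (alpha : R -> R) : Prop :=
  continuous alpha /\ alpha 0 = 0 /\ {homo alpha : x y / x < y} /\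
  (alpha @ +oo --> +oo) /\ (alpha @ -oo --> -oo).

(** continuously differentiable on an (open) set A: differentiable at every
    point of A, with every directional derivative x |-> df(x) v continuous at
    every point of A (equivalent to C^1 in finite dimension). *)
Definition C1_on (R : realType) (U V : normedModType R) (A : set U) (F : U -> V)
  : Prop :=
  (forall x, A x -> differentiable F x) /\
  (forall v x, A x -> (fun y => 'd F y v) @ x --> 'd F x v).

Definition Lie_f (R : realType) (N : nat) (h : 'cV[R]_N -> R)
  (f : 'cV[R]_N -> 'cV[R]_N) (x : 'cV[R]_N) : R := 'd h x (f x).

Definition Lie_g (R : realType) (N m : nat) (h : 'cV[R]_N -> R)
  (g : 'cV[R]_N -> 'M[R]_(N, m)) (x : 'cV[R]_N) : 'rV[R]_m :=
  \row_j 'd h x (col j (g x)).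

(** control barrier function for xdot = f(x) + g(x) u on the state space X
    (the safe set being C = {x in X | h x >= 0}). The supremum is taken in
    the extended reals (it may be +oo). *)
Definition is_CBF (R : realType) (N m : nat) (f : 'cV[R]_N -> 'cV[R]_N)
  (g : 'cV[R]_N -> 'M[R]_(N, m)) (X : set 'cV[R]_N) (h : 'cV[R]_N -> R) : Prop :=
  C1_on X h /\
  exists alpha : R -> R, ext_class_Kinf alpha /\
    forall x, X x ->
      ((- alpha (h x))%:E <
       ereal_sup [set (Lie_f h f x + (Lie_g h g x *m u) 0 0)%:E | u in [set: 'cV[R]_m]])%E.

(** Robotic system in control-affine form, state x = (q, qdot) = col_mx q qdot *)
Section Robot.
Context (R : realType) (n m : nat).
Variables (D : 'cV[R]_n -> 'M[R]_n) (C : 'cV[R]_n -> 'cV[R]_n -> 'M[R]_n)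
  (G : 'cV[R]_n -> 'cV[R]_n) (B : 'M[R]_(n, m)).

Definition robot_f (x : 'cV[R]_(n + n)) : 'cV[R]_(n + n) :=
  let q := usubmx x in let qd := dsubmx x in
  col_mx qd (- (invmx (D q) *m (C q qd *m qd + G q))).

Definition robot_g (x : 'cV[R]_(n + n)) : 'M[R]_(n + n, m) :=
  col_mx 0 (invmx (D (usubmx x)) *m B).
End Robot.

Definition robot_h (R : realType) (n : nat) (D : 'cV[R]_n -> 'M[R]_n)
  (h0 : 'cV[R]_n -> R) (k0 : 'cV[R]_n -> 'cV[R]_n) (mu : R)
  (x : 'cV[R]_(n + n)) : R :=
  let q := usubmx x in let e := dsubmx x - k0 q in
  h0 q - (2 * mu)^-1 * ((e^T *m D q *m e) 0 0).

Definition tangent_set (R : realType) (n : nat) (Q : set 'cV[R]_n)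
  : set 'cV[R]_(n + n) := [set x | Q (usubmx x)].

(* Main.v *)
Require Import Defs.
From HB Require Import structures.
From mathcomp Require Import all_boot all_order all_algebra.
From mathcomp Require Import all_classical all_reals all_analysis.
From mathcomp Require Import ring lra.
Import Order.TTheory GRing.Theory Num.Theory.
Import numFieldNormedType.Exports.
Local Open Scope classical_set_scope.
Local Open Scope ring_scope.

Section Helpers.
Context {R : realType} {n : nat}.
Local Notation X := 'cV[R]_(n + n).

Lemma continuous_usubmx' m1 m2 k :
  continuous (usubmx : 'M[R]_(m1 + m2, k) -> 'M[R]_(m1, k)).
Proof.
move=> u A /nbhs_ballP[e /= e0 eA].
apply/nbhs_ballP; exists e => //= v [_ uv]; apply: eA; split => // i j.
by apply: (le_lt_trans _ (uv (lshift m2 i) j)); rewrite !mxE.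
Qed.

Lemma diff_coord' a b (M : 'M[R]_(a, b)) i j :
  'd (fun N : 'M[R]_(a, b) => N i j) M = (fun N : 'M[R]_(a, b) => N i j) :> (_ -> R).
Proof.
have @f : {linear 'M[R]_(a, b) -> R}.
  by exists (fun N : 'M[R]_(_, _) => N i j); do 2![eexists]; do ?[constructor];
     rewrite ?mxE// => ? *; rewrite ?mxE//; move=> ?; rewrite !mxE.
rewrite (_ : (fun _ => _) = f) //; apply: diff_lin; exact: coord_continuous.
Qed.

Lemma diff_usub (x : X) : 'd (usubmx : X -> 'cV[R]_n) x = usubmx :> (X -> _).
Proof. apply: diff_lin; exact: continuous_usubmx'. Qed.

Lemma differentiable_usub (x : X) : differentiable (usubmx : X -> 'cV[R]_n) x.
Proof. apply: linear_differentiable; exact: continuous_usubmx'. Qed.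

Lemma cvg_cstX (x : X) (c : R) : (fun _ : X => c) @ x --> c.
Proof. have H := @cvg_cst R c _ (nbhs x). exact: H. Qed.

Definition hasD (A : set X) (f : X -> R) (df : X -> X -> R) :=
  (forall x, A x -> differentiable f x /\ forall v, 'd f x v = df x v) /\
  (forall v x, A x -> (fun y => df y v) @ x --> df x v).

Lemma hasD_cst A c : hasD A (fun _ => c) (fun _ _ => 0).
Proof.
split=> [x _|v x _]; last first.
  exact: cvg_cstX.
split; first exact: differentiable_cst.
by move=> v; rewrite (diff_cst c x).
Qed.

Lemma hasD_add A f g df dg : hasD A f df -> hasD A g dg ->
  hasD A (fun x => f x + g x) (fun x v => df x v + dg x v).
Proof.
move=> [Hf Cf] [Hg Cg]; split=> [x Ax|v x Ax]; last exact: cvgD (Cf v x Ax) (Cg v x Ax).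
have [dfx Ef] := Hf x Ax; have [dgx Eg] := Hg x Ax.
split; first exact: differentiableD.
move=> v; rewrite (_ : (fun x => f x + g x) = f + g) // diffD //=; congr (_ + _); [exact: Ef|exact: Eg].
Qed.

Lemma hasD_opp A f df : hasD A f df ->
  hasD A (fun x => - f x) (fun x v => - df x v).
Proof.
move=> [Hf Cf]; split=> [x Ax|v x Ax]; last exact: cvgN (Cf v x Ax).
have [dfx Ef] := Hf x Ax.
split; first exact: differentiableN.
by move=> v; rewrite (_ : (fun x => - f x) = - f) // diffN //=; congr (- _); exact: Ef.
Qed.

Lemma hasD_mul A f g df dg : hasD A f df -> hasD A g dg ->
  hasD A (fun x => f x * g x) (fun x v => f x * dg x v + g x * df x v).
Proof.
move=> [Hf Cf] [Hg Cg]; split=> [x Ax|v x Ax].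
  have [dfx Ef] := Hf x Ax; have [dgx Eg] := Hg x Ax.
  split; first exact: differentiableM.
  move=> v; rewrite (_ : (fun x => f x * g x) = f * g) // diffM //.
  change (f x * 'd g x v + g x * 'd f x v = f x * dg x v + g x * df x v).
  by congr (_ * _ + _ * _); [exact: Eg|exact: Ef].
have [dfx _] := Hf x Ax; have [dgx _] := Hg x Ax.
have cf : f @ x --> f x := differentiable_continuous dfx.
have cg : g @ x --> g x := differentiable_continuous dgx.
exact: cvgD (cvgM cf (Cg v x Ax)) (cvgM cg (Cf v x Ax)).
Qed.

Lemma hasD_sum A k (F : 'I_k -> X -> R) dF : (forall i, hasD A (F i) (dF i)) ->
  hasD A (fun x => \sum_(i < k) F i x) (fun x v => \sum_(i < k) dF i x v).
Proof.
move=> H.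
have : hasD A (\sum_(i < k) F i) (\sum_(i < k) dF i).
  apply: (big_rec2 (fun f df => hasD A f df)); first exact: hasD_cst.
  move=> i f df _ Hi.
  change (hasD A (fun x => F i x + f x) (fun x v => dF i x v + df x v)).
  exact: hasD_add (H i) Hi.
rewrite fct_sumE fct_sumE; congr hasD; apply/funext => x.
by rewrite fct_sumE.
Qed.

Lemma hasD_coord A (k : 'I_(n + n)) :
  hasD A (fun x : X => x k 0) (fun _ v => v k 0).
Proof.
split=> [x _|v x _]; last first.
  exact: cvg_cstX.
split; first exact: differentiable_coord.
by move=> v; rewrite diff_coord'.
Qed.

Lemma hasD_u (Q : set 'cV[R]_n) (g : 'cV[R]_n -> R) : C1_on Q g ->
  hasD (tangent_set Q) (fun x => g (usubmx x))
    (fun x v => 'd g (usubmx x) (usubmx v)).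
Proof.
move=> [Hd Hc]; split=> [x Ax|v x Ax].
  have dg := Hd _ Ax.
  split; first exact: (differentiable_comp (differentiable_usub x) dg).
  move=> v; rewrite (_ : (fun x => g (usubmx x)) = g \o usubmx) //.
  by rewrite diff_comp ?diff_usub //; exact: differentiable_usub.
apply: (continuous_comp (f := usubmx) (g := fun z => 'd g z (usubmx v))).
  exact: continuous_usubmx'.
exact: Hc.
Qed.

Lemma hasD_um (Q : set 'cV[R]_n) a b (g : 'cV[R]_n -> 'M[R]_(a, b)) i j :
  C1_on Q g ->
  hasD (tangent_set Q) (fun x => g (usubmx x) i j)
    (fun x v => 'd g (usubmx x) (usubmx v) i j).
Proof.
move=> [Hd Hc]; split=> [x Ax|v x Ax].
  have dg := Hd _ Ax.
  have dgu := differentiable_comp (differentiable_usub x) dg.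
  split.
    exact: (differentiable_comp dgu (differentiable_coord ((g \o usubmx) x) i j)).
  move=> v.
  have E : (fun x => g (usubmx x) i j) = (fun N : 'M[R]_(a,b) => N i j) \o (g \o usubmx) by [].
  have dc := differentiable_coord ((g \o usubmx) x) i j.
  rewrite E diff_comp // diff_coord' /=.
  rewrite diff_comp //; last exact: differentiable_usub.
  by rewrite diff_usub.
apply: (continuous_comp (f := usubmx) (g := fun z => 'd g z (usubmx v) i j)).
  exact: continuous_usubmx'.
apply: (continuous_comp (f := fun z => 'd g z (usubmx v)) (g := fun N : 'M[R]_(a,b) => N i j)).
  exact: Hc.
exact: coord_continuous.
Qed.

Lemma C1_from_hasD (A : set X) f df : open A -> hasD A f df -> C1_on A f.
Proof.
move=> Ao [Hd Hc]; split=> [x Ax|v x Ax]; first by have [] := Hd x Ax.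
have [_ Ex] := Hd x Ax.
suff H : (fun y => 'd f y v) @ x --> df x v by move: H; rewrite -(Ex v).
have An : nbhs x A by move: Ao; rewrite openE; apply.
have Hn : \forall y \near x, df y v = 'd f y v.
  apply: filterS An => y Ay.
  by have [_ ->] := Hd y Ay.
apply: cvg_trans (Hc v x Ax).
exact: near_eq_cvg Hn.
Qed.

End Helpers.

Lemma Lie_g_mul (R : realType) N m (h : 'cV[R]_N -> R) (g : 'cV[R]_N -> 'M[R]_(N, m)) x
  (u : 'cV[R]_m) : (Lie_g h g x *m u) 0 0 = 'd h x (g x *m u).
Proof.
have -> : g x *m u = \sum_j u j 0 *: col j (g x).
  apply/matrixP => i k; rewrite !mxE summxE; apply: eq_bigr => j _.
  by rewrite !mxE (ord1 k) mulrC.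
rewrite linear_sum mxE; apply: eq_bigr => j _.
by rewrite linearZ /= mxE mulrC.
Qed.

Lemma quad_sum (R : realType) n (e : 'cV[R]_n) (M : 'M[R]_n) :
  (e^T *m M *m e) 0 0 = \sum_(j < n) \sum_(i < n) e i 0 * (M i j * e j 0).
Proof.
rewrite mxE; apply: eq_bigr => j _.
rewrite mxE mulr_suml; apply: eq_bigr => i _.
by rewrite !mxE mulrA.
Qed.

Lemma posdef_unit (R : realType) n (M : 'M[R]_n) :
  (forall v : 'cV[R]_n, v != 0 -> 0 < (v^T *m M *m v) 0 0) -> M \in unitmx.
Proof.
move=> H; rewrite unitmxE unitfE; apply/det0P => -[v vn0 vM].
have : v^T != 0 by apply: contra vn0 => /eqP Hv; rewrite -[v]trmxK Hv trmx0.
move=> /H; rewrite trmxK vM mul0mx mxE ltxx //.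
Qed.
Arguments C1_from_hasD {R n A f df}.
Arguments hasD_add {R n A f g df dg}.
Arguments hasD_opp {R n A f df}.
Arguments hasD_mul {R n A f g df dg}.
Arguments hasD_sum {R n A k F dF}.
Arguments hasD_u {R n Q g}.
Arguments hasD_um {R n Q a b g} i j.

Theorem lemma4 (R : realType) (n : nat) (Q : set 'cV[R]_n)
  (D : 'cV[R]_n -> 'M[R]_n) (C : 'cV[R]_n -> 'cV[R]_n -> 'M[R]_n)
  (G : 'cV[R]_n -> 'cV[R]_n) (B : 'M[R]_n)
  (h0 : 'cV[R]_n -> R) (k0 : 'cV[R]_n -> 'cV[R]_n) (mu : R) :
  open Q ->
  (forall q, Q q -> forall v : 'cV[R]_n, v != 0 -> 0 < (v^T *m D q *m v) 0 0) ->
  C1_on Q D ->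
  C1_on Q h0 ->
  C1_on Q k0 ->
  (exists alpha : R -> R, ext_class_Kinf alpha /\
     forall q, Q q -> - alpha (h0 q) < 'd h0 q (k0 q)) ->
  0 < mu ->
  B \in unitmx ->
  is_CBF (robot_f D C G) (robot_g D B) (tangent_set Q) (robot_h D h0 k0 mu).
Proof.
move=> Qo Dpd HD Hh0 Hk0 [alpha [Kalpha Halpha]] mu0 Bu.
set T := tangent_set Q.
set c := (2 * mu)^-1.
have c0 : 0 < c by rewrite invr_gt0 mulr_gt0.
pose E (i : 'I_n) (x : 'cV[R]_(n + n)) := x (rshift n i) 0 - k0 (usubmx x) i 0.
pose dE (i : 'I_n) (x v : 'cV[R]_(n + n)) :=
  v (rshift n i) 0 + - 'd k0 (usubmx x) (usubmx v) i 0.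
have hE i : hasD T (E i) (dE i).
  exact: hasD_add (hasD_coord T (rshift n i)) (hasD_opp (hasD_um i 0 Hk0)).
pose Dc (i j : 'I_n) (x : 'cV[R]_(n + n)) := D (usubmx x) i j.
pose dDc (i j : 'I_n) (x v : 'cV[R]_(n + n)) := 'd D (usubmx x) (usubmx v) i j.
have hD i j : hasD T (Dc i j) (dDc i j) by exact: hasD_um i j HD.
pose S x := \sum_(j < n) \sum_(i < n) E i x * (Dc i j x * E j x).
pose dS x v := \sum_(j < n) \sum_(i < n)
  (E i x * (Dc i j x * dE j x v + E j x * dDc i j x v) + Dc i j x * E j x * dE i x v).
have hS : hasD T S dS.
  apply: hasD_sum => j; apply: hasD_sum => i.
  exact: hasD_mul (hE i) (hasD_mul (hD i j) (hE j)).
pose dh x v := 'd h0 (usubmx x) (usubmx v) + ((- c) * dS x v + S x * 0).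
have hh : hasD T (robot_h D h0 k0 mu) dh.
  have -> : robot_h D h0 k0 mu = (fun x => h0 (usubmx x) + (- c) * S x).
    apply/funext => x; rewrite /robot_h quad_sum mulNr; congr (_ - (_ * _)).
    apply: eq_bigr => j _; apply: eq_bigr => i _.
    by rewrite /E /Dc !mxE.
  exact: hasD_add (hasD_u Hh0) (hasD_mul (hasD_cst T (- c)) hS).
have [Hd Hc] := hh.
have Topen : open T.
  change (open ((usubmx : 'cV[R]_(n + n) -> 'cV[R]_n) @^-1` Q)); apply: open_comp => // x _.
  exact: continuous_usubmx'.
split; first exact: C1_from_hasD Topen hh.
exists alpha; split => // x Tx.
set q := usubmx x.
set e := dsubmx x - k0 q.
have EE i : E i x = e i 0 by rewrite /E /e !mxE.
have Qq : Q q := Tx.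
have SE : S x = (e^T *m D q *m e) 0 0.
  rewrite quad_sum; apply: eq_bigr => j _; apply: eq_bigr => i _.
  by rewrite !EE.
have hxE : robot_h D h0 k0 mu x = h0 q - c * S x by rewrite SE.
have [_ Ehx] := Hd x Tx.
rewrite /Lie_f.
have [e0|en0] := eqVneq e 0.
  have E0 i : E i x = 0 by rewrite EE e0 mxE.
  have S0 : S x = 0.
    by rewrite /S big1 // => j _; rewrite big1 // => i _; rewrite E0 mul0r.
  have dS0 v : dS x v = 0.
    by rewrite /dS big1 // => j _; rewrite big1 // => i _; rewrite !E0 !(mul0r, mulr0, add0r).
  apply: (@lt_le_trans _ _ (('d (robot_h D h0 k0 mu) x (robot_f D C G x)
     + (Lie_g (robot_h D h0 k0 mu) (robot_g D B) x *m 0) 0 0)%:E)); last first.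
    by apply: ereal_sup_ubound; exists 0.
  rewrite lte_fin mulmx0 mxE addr0 Ehx /dh dS0 S0 mulr0 mulr0 addr0 addr0.
  have -> : usubmx (robot_f D C G x) = dsubmx x by rewrite /robot_f col_mxKu.
  have -> : dsubmx x = k0 q by apply/eqP; rewrite -subr_eq0 -/e e0.
  by rewrite hxE S0 mulr0 subr0; apply: Halpha.
have Dqu : D q \in unitmx := @posdef_unit _ _ _ (Dpd q Qq).
have Spos : 0 < S x by rewrite SE; apply: Dpd.
set L := 'd (robot_h D h0 k0 mu) x (robot_f D C G x).
set a := alpha (robot_h D h0 k0 mu x).
set t := (`|L| + `|a| + 1) / (2 * c * S x).
set w := - t *: e.
set u := invmx B *m (D q *m w).
apply: (@lt_le_trans _ _ ((L
     + (Lie_g (robot_h D h0 k0 mu) (robot_g D B) x *m u) 0 0)%:E)); last first.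
  by apply: ereal_sup_ubound; exists u.
rewrite lte_fin Lie_g_mul.
have -> : robot_g D B x *m u = col_mx 0 w.
  by rewrite /robot_g mul_col_mx mul0mx -/q -mulmxA mulKVmx // mulKmx.
rewrite Ehx.
have dEw j : dE j x (col_mx 0 w) = - t * E j x.
  rewrite /dE col_mxEd col_mxKu linear0 /w !mxE EE oppr0 addr0. by rewrite /e !mxE.
have dDw i j : dDc i j x (col_mx 0 w) = 0.
  by rewrite /dDc col_mxKu linear0 mxE.
have dSw : dS x (col_mx 0 w) = - (2 * t) * S x.
  rewrite /dS /S mulr_sumr; apply: eq_bigr => j _.
  rewrite mulr_sumr; apply: eq_bigr => i _.
  rewrite !dEw dDw; ring.
rewrite /dh dSw col_mxKu linear0 mulr0 addr0 add0r.
have -> : - c * (- (2 * t) * S x) = `|L| + `|a| + 1.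
  rewrite /t; field.
  by rewrite !gt_eqF.
have := ler_norm (- L); rewrite normrN.
have := ler_norm (- a); rewrite normrN.
lra.
Qed.
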